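(* Let $A=A_{\bar 0}\oplus A_{\bar 1}$ be a finite-dimensional associative superalgebra over an algebraically closed field $\mathbb{K}$ of characteristic zero. Then $A$ admits an even-symmetric structure if and only if there exist two isomorphisms of $A_{\bar 0}$-bimodules $\phi_{\bar 0}:A_{\bar 0}\to A_{\bar 0}^*$ and $\phi_{\bar 1}:A_{\bar 1}\to A_{\bar 1}^*$ such that $$\phi_i(x)(y)=(-1)^i\phi_i(y)(x)\quad\text{for all } x,y\in A_i,\ i\in\{\bar 0,\bar 1\},$$ $$\phi_{\bar 1}(x.y)(z)=\phi_{\bar 0}(x)(y.z)\quad\text{for all } x\in A_{\bar 0},\ y,z\in A_{\bar 1}.$$
   Context: A superalgebra is a $\mathbb{Z}_2$-graded algebra $A=A_{\bar 0}\oplus A_{\bar 1}$ with $A_\alpha A_\beta\subseteq A_{\alpha+\beta}$; it is associative if it is associative as an algebra; $|x|$ denotes the degree of a homogeneous element $x$. A bilinear form $B$ on $A$ is even if $B(A_{\bar 0},A_{\bar 1})=\{0\}$ (so also $B(A_{\bar 1},A_{\bar 0})=\{0\}$), and odd if $B(A_{\bar 0},A_{\bar 0})=B(A_{\bar 1},A_{\bar 1})=\{0\}$. $B$ is supersymmetric if $B(x,y)=(-1)^{|x||y|}B(y,x)$ for homogeneous $x,y$, associative if $B(x.y,z)=B(x,y.z)$ for all $x,y,z$, and non-degenerate if $B(x,A)=\{0\}$ implies $x=0$. An even-symmetric (resp. odd-symmetric) structure on $A$ is an even (resp. odd), supersymmetric, associative, non-degenerate bilinear form on $A$. For $i\in\{\bar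 0,\bar 1\}$, $A_i$ is an $A_{\bar 0}$-bimodule via left and right multiplication, and $A_i^*$ is an $A_{\bar 0}$-bimodule via $(x\cdot f)(y)=f(y.x)$ and $(f\cdot x)(y)=f(x.y)$ for $x\in A_{\bar 0}$, $f\in A_i^*$, $y\in A_i$. In the formula $(-1)^i$, $i$ is read as $0$ or $1$. *)

(* Defs.v *)
From HB Require Import structures.
From mathcomp Require Import all_boot all_order all_algebra.
Set Implicit Arguments. Unset Strict Implicit. Unset Printing Implicit Defensive.
Import GRing.Theory.
Local Open Scope ring_scope.

(* A superalgebra A = A0 (+) A1 over K, given by its homogeneous components
   (finite-dimensional K-vector spaces) and the four component products
   A_i x A_j -> A_(i+j). The underlying space of A is the product A0 * A1. *)
Record superMul (K : fieldType) (A0 A1 : vectType K) := SuperMul {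
  m00 : A0 -> A0 -> A0;
  m01 : A0 -> A1 -> A1;
  m10 : A1 -> A0 -> A1;
  m11 : A1 -> A1 -> A0 }.

Definition bilin (K : fieldType) (U V W : lmodType K) (f : U -> V -> W) :=
  (forall (a : K) u u' v, f (a *: u + u') v = a *: f u v + f u' v) /\
  (forall (a : K) u v v', f u (a *: v + v') = a *: f u v + f u v').

Definition lin_form (K : fieldType) (V : lmodType K) (f : V -> K) :=
  forall (a : K) u v, f (a *: u + v) = a * f u + f v.

Section Super.
Variables (K : fieldType) (A0 A1 : vectType K) (S : superMul A0 A1).

Definition smul (x y : A0 * A1) : A0 * A1 :=
  (m00 S x.1 y.1 + m11 S x.2 y.2, m01 S x.1 y.2 + m10 S x.2 y.1).

Definition assoc_superalgebra :=
  [/\ bilin (m00 S), bilin (m01 S), bilin (m10 S), bilin (m11 S)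
    & forall x y z, smul (smul x y) z = smul x (smul y z)].

(* homogeneous of degree i (false = 0bar, true = 1bar) *)
Definition homog (i : bool) (x : A0 * A1) : bool :=
  if i then x.1 == 0 else x.2 == 0.

Definition bilin_form (B : A0 * A1 -> A0 * A1 -> K) :=
  (forall x, lin_form (B x)) /\ (forall y, lin_form (fun x => B x y)).

Definition even_form (B : A0 * A1 -> A0 * A1 -> K) :=
  (forall (a : A0) (b : A1), B (a, 0) (0, b) = 0) /\
  (forall (a : A0) (b : A1), B (0, b) (a, 0) = 0).

Definition supersymmetric (B : A0 * A1 -> A0 * A1 -> K) :=
  forall (i j : bool) x y, homog i x -> homog j y ->
    B x y = (-1) ^+ (i && j) * B y x.

Definition assoc_form (B : A0 * A1 -> A0 * A1 -> K) :=
  forall x y z, B (smul x y) z = B x (smul y z).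

Definition nondegenerate (B : A0 * A1 -> A0 * A1 -> K) :=
  forall x, (forall y, B x y = 0) -> x = 0.

Definition even_symmetric_structure (B : A0 * A1 -> A0 * A1 -> K) :=
  [/\ bilin_form B, even_form B, supersymmetric B, assoc_form B
    & nondegenerate B].

(* phi : V -> V^* is a linear isomorphism onto the dual space V^* of linear
   forms; phi x is represented as the function y |-> phi x y. *)
Definition dual_iso (V : vectType K) (phi : V -> V -> K) :=
  [/\ forall x, lin_form (phi x),
      (forall (a : K) x x' y, phi (a *: x + x') y = a * phi x y + phi x' y),
      (forall x x', phi x =1 phi x' -> x = x')
    & forall f : V -> K, lin_form f -> exists x, phi x =1 f].

(* A0-bimodule maps A_i -> A_i^*, with (x.f)(y) = f(y.x), (f.x)(y) = f(x.y) *)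
Definition bimod_map0 (phi : A0 -> A0 -> K) :=
  (forall (x a y : A0), phi (m00 S x a) y = phi a (m00 S y x)) /\
  (forall (x a y : A0), phi (m00 S a x) y = phi a (m00 S x y)).

Definition bimod_map1 (phi : A1 -> A1 -> K) :=
  (forall (x : A0) (a y : A1), phi (m01 S x a) y = phi a (m10 S y x)) /\
  (forall (x : A0) (a y : A1), phi (m10 S a x) y = phi a (m01 S x y)).

End Super.

(* Main.v *)
Require Import Defs.
From HB Require Import structures.
From mathcomp Require Import all_boot all_order all_algebra.
Import GRing.Theory.
Local Open Scope ring_scope.

Lemma dual_surj (K : fieldType) (V : vectType K) (phi : V -> V -> K) :
  (forall x, lin_form (phi x)) ->
  (forall (a : K) x x' y, phi (a *: x + x') y = a * phi x y + phi x' y) ->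
  (forall x x', phi x =1 phi x' -> x = x') ->
  forall f : V -> K, lin_form f -> exists x, phi x =1 f.
Proof.
move=> hl hr hinj f hf.
pose g (x : V) : 'Hom(V, K^o) :=
  let L : {linear V -> K^o} := HB.pack (phi x : V -> K^o) (GRing.isLinear.Build _ _ _ _ (phi x : V -> K^o) (hl x)) in linfun L.
have gE x y : g x y = phi x y by rewrite /g lfunE.
clearbody g.
have glin : linear g.
  by move=> a x x'; apply/lfunP => y; rewrite add_lfunE scale_lfunE !gE hr.
pose GL : {linear V -> 'Hom(V, K^o)} := HB.pack g (GRing.isLinear.Build _ _ _ _ g glin).
pose G : 'Hom(V, 'Hom(V, K^o)) := linfun GL.
have GE x : G x = g x by rewrite /G lfunE.
have ker0 : lker G == 0%VS.
  apply/lker0P => x x'; rewrite !GE => e.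
  apply: hinj => y; by rewrite -!gE e.
have imf : limg G = fullv.
  apply/eqP; rewrite eqEdim subvf /= limg_dim_eq; last by rewrite capfv; exact/eqP.
  by rewrite !dimvf; change (dim V * 1 <= dim V)%N; rewrite muln1.
pose FL : {linear V -> K^o} := HB.pack (f : V -> K^o) (GRing.isLinear.Build _ _ _ _ (f : V -> K^o) hf).
pose F : 'Hom(V, K^o) := linfun FL.
have : F \in limg G by rewrite imf memvf.
case/memv_imgP => x _ eFx; exists x => y.
by rewrite -gE -GE -eFx /F lfunE.
Qed.

Lemma lf0 (K : fieldType) (V : lmodType K) (f : V -> K) : lin_form f -> f 0 = 0.
Proof.
move=> h; have := h 1 0 0; rewrite scale1r addr0 mul1r => e.
by apply: (addrI (f 0)); rewrite addr0 -e.
Qed.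

Lemma lfD (K : fieldType) (V : lmodType K) (f : V -> K) u v :
  lin_form f -> f (u + v) = f u + f v.
Proof. by move=> h; have := h 1 u v; rewrite scale1r mul1r. Qed.

Lemma lfN (K : fieldType) (V : lmodType K) (f : V -> K) u :
  lin_form f -> f (- u) = - f u.
Proof. by move=> h; have := h (-1) u 0; rewrite !addr0 scaleN1r mulN1r => ->; rewrite lf0 ?addr0. Qed.

Lemma lfB (K : fieldType) (V : lmodType K) (f : V -> K) u v :
  lin_form f -> f (u - v) = f u - f v.
Proof. by move=> h; rewrite lfD // lfN. Qed.

Lemma bl0 (K : fieldType) (U V W : lmodType K) (m : U -> V -> W) u :
  bilin m -> m u 0 = 0.
Proof.
case=> _ h; have := h 1 u 0 0; rewrite scale1r addr0 scale1r => e.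
by apply: (addrI (m u 0)); rewrite addr0 -e.
Qed.

Lemma b0l (K : fieldType) (U V W : lmodType K) (m : U -> V -> W) v :
  bilin m -> m 0 v = 0.
Proof.
case=> h _; have := h 1 0 0 v; rewrite scale1r addr0 scale1r => e.
by apply: (addrI (m 0 v)); rewrite addr0 -e.
Qed.

Arguments bl0 {K U V W m} u.
Arguments b0l {K U V W m} v.

Lemma di0r (K : fieldType) (V : vectType K) (phi : V -> V -> K) x :
  dual_iso phi -> phi x 0 = 0.
Proof. by case=> h _ _ _; apply: lf0. Qed.

Lemma di0l (K : fieldType) (V : vectType K) (phi : V -> V -> K) y :
  dual_iso phi -> phi 0 y = 0.
Proof. by case=> _ h _ _; apply: (@lf0 _ V (fun x => phi x y)) => a u v; apply: h. Qed.

Lemma diDl (K : fieldType) (V : vectType K) (phi : V -> V -> K) x x' y :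
  dual_iso phi -> phi (x + x') y = phi x y + phi x' y.
Proof. by case=> _ h _ _; apply: (@lfD _ V (fun x => phi x y)) => a u v; apply: h. Qed.

Lemma diDr (K : fieldType) (V : vectType K) (phi : V -> V -> K) x y y' :
  dual_iso phi -> phi x (y + y') = phi x y + phi x y'.
Proof. by case=> h _ _ _; apply: lfD. Qed.

Lemma backward (K : fieldType) (A0 A1 : vectType K) (S : superMul A0 A1)
  (phi0 : A0 -> A0 -> K) (phi1 : A1 -> A1 -> K) :
  dual_iso phi0 -> dual_iso phi1 -> bimod_map0 S phi0 -> bimod_map1 S phi1 ->
  (forall x y : A0, phi0 x y = phi0 y x) ->
  (forall x y : A1, phi1 x y = - phi1 y x) ->
  (forall (x : A0) (y z : A1), phi1 (m01 S x y) z = phi0 x (m11 S y z)) ->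
  even_symmetric_structure S (fun x y => phi0 x.1 y.1 + phi1 x.2 y.2).
Proof.
move=> d0 d1 [b0a b0b] [b1a b1b] s0 s1 h.
have d0' := d0; have d1' := d1.
case: d0' => l0r l0l inj0 _; case: d1' => l1r l1l inj1 _.
split.
- split=> [x a u v | y a u v] /=.
    by rewrite (l0r x.1) (l1r x.2) mulrDr addrACA.
  by rewrite l0l l1l mulrDr addrACA.
- by split=> a b /=; rewrite di0r // di0l // addr0.
- move=> [] [] x y /=; rewrite /homog => /eqP hx /eqP hy; rewrite ?hx ?hy.
  + by rewrite ?di0r // ?di0l // mulN1r s1 !add0r.
  + by rewrite ?di0r // ?di0l // mul1r ?addr0.
  + by rewrite ?di0r // ?di0l // mul1r ?addr0.
  + by rewrite ?di0r // ?di0l // mul1r !addr0 s0.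
- move=> x y z /=.
  rewrite !diDl // !diDr //.
  rewrite (b0b y.1 x.1) h b1b [phi0 (m11 _ _ _) _]s0 -h b1a.
  by rewrite [phi0 x.1 (m00 _ _ _) + _]addrC addrACA [X in _ = X]addrACA addrC [phi1 _ _ + phi0 _ _]addrC.
- move=> [x1 x2] hB.
  have e1 : x1 = 0.
    by apply: inj0 => w; rewrite di0l //; have := hB (w, 0); rewrite /= di0r // addr0.
  have e2 : x2 = 0.
    by apply: inj1 => w; rewrite di0l //; have := hB (0, w); rewrite /= di0r // add0r.
  by rewrite e1 e2.
Qed.

Lemma forward (K : fieldType) (A0 A1 : vectType K) (S : superMul A0 A1)
  (hS : assoc_superalgebra S) (B : A0 * A1 -> A0 * A1 -> K) :
  even_symmetric_structure S B ->
  (exists (phi0 : A0 -> A0 -> K) (phi1 : A1 -> A1 -> K),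
     [/\ dual_iso phi0, dual_iso phi1, bimod_map0 S phi0 & bimod_map1 S phi1] /\
     [/\ (forall x y : A0, phi0 x y = phi0 y x),
         (forall x y : A1, phi1 x y = - phi1 y x)
       & forall (x : A0) (y z : A1), phi1 (m01 S x y) z = phi0 x (m11 S y z)]).
Proof.
case: hS => h00 h01 h10 h11 _.
case=> [[Br Bl] [ev1 ev2] ss ass nd].
have s00 x a : smul S (x, 0) (a, 0) = (m00 S x a, 0).
  by rewrite /smul /= (b0l _ h11) (bl0 _ h01) (b0l _ h10) !addr0.
have s01 x a : smul S (x, 0) (0, a) = (0, m01 S x a).
  by rewrite /smul /= (bl0 _ h00) (b0l _ h11) (b0l _ h10) !addr0.
have s10 x a : smul S (0, a) (x, 0) = (0, m10 S a x).
  by rewrite /smul /= (b0l _ h00) (bl0 _ h11) (b0l _ h01) !add0r.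
have s11 x a : smul S (0, x) (0, a) = (m11 S x a, 0).
  by rewrite /smul /= (b0l _ h00) (b0l _ h01) (bl0 _ h10) !add0r.
have sym0 u v : B (u, 0) (v, 0) = B (v, 0) (u, 0).
  by rewrite (ss false false) ?mul1r //=.
have sym1 u v : B (0, u) (0, v) = - B (0, v) (0, u).
  by rewrite (ss true true) ?mulN1r //=.
have BlD u v y : B (u + v) y = B u y + B v y.
  by apply: (@lfD _ _ (fun x => B x y)) => a p q; apply: Bl.
have BlN u y : B (- u) y = - B u y.
  by apply: (@lfN _ _ (fun x => B x y)) => a p q; apply: Bl.
have Bsplit u y : B u y = B u (y.1, 0) + B u (0, y.2).
  rewrite -lfD //; congr B; case: y => y1 y2; congr (_, _); rewrite /= ?addr0 ?add0r //.
exists (fun x y => B (x, 0) (y, 0)), (fun x y => B (0, x) (0, y)).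
split; last first.
  split=> [x y|x y|x y z]; first exact: sym0; first exact: sym1.
  by rewrite -s01 ass s11.
split.
- have r : forall x, lin_form (fun y : A0 => B (x, 0) (y, 0)).
    move=> x a u v /=.
    have -> : ((a *: u + v, 0) : A0 * A1) = a *: (u, 0) + (v, 0).
      by apply/eqP; rewrite xpair_eqE /= scaler0 addr0 !eqxx.
    by rewrite Br.
  have l : forall (a : K) (x x' y : A0),
      B (a *: x + x', 0) (y, 0) = a * B (x, 0) (y, 0) + B (x', 0) (y, 0).
    move=> a x x' y.
    have -> : ((a *: x + x', 0) : A0 * A1) = a *: (x, 0) + (x', 0).
      by apply/eqP; rewrite xpair_eqE /= scaler0 addr0 !eqxx.
    by rewrite Bl.
  have inj : forall x x' : A0, (forall y, B (x, 0) (y, 0) = B (x', 0) (y, 0)) -> x = x'.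
    move=> x x' e; apply/eqP; rewrite -subr_eq0; apply/eqP.
    have := nd ((x, 0) - (x', 0)) => /(_ _) /(congr1 fst) /= -> //.
    by move=> y; rewrite Bsplit !BlD !BlN e !ev1 subrr subr0 addr0.
  split => //; exact: dual_surj.
- have r : forall x, lin_form (fun y : A1 => B (0, x) (0, y)).
    move=> x a u v /=.
    have -> : ((0, a *: u + v) : A0 * A1) = a *: (0, u) + (0, v).
      by apply/eqP; rewrite xpair_eqE /= scaler0 addr0 !eqxx.
    by rewrite Br.
  have l : forall (a : K) (x x' y : A1),
      B (0, a *: x + x') (0, y) = a * B (0, x) (0, y) + B (0, x') (0, y).
    move=> a x x' y.
    have -> : ((0, a *: x + x') : A0 * A1) = a *: (0, x) + (0, x').
      by apply/eqP; rewrite xpair_eqE /= scaler0 addr0 !eqxx.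
    by rewrite Bl.
  have inj : forall x x' : A1, (forall y, B (0, x) (0, y) = B (0, x') (0, y)) -> x = x'.
    move=> x x' e; apply/eqP; rewrite -subr_eq0; apply/eqP.
    have := nd ((0, x) - (0, x')) => /(_ _) /(congr1 snd) /= -> //.
    by move=> y; rewrite Bsplit !BlD !BlN e !ev2 !subrr addr0.
  split => //; exact: dual_surj.
- split=> x a y /=.
    by rewrite sym0 -s00 -ass s00 sym0.
  by rewrite -s00 ass s00.
- split=> x a y /=.
    by rewrite -s01 ass s11 -s10 -ass s11 sym0.
  by rewrite -s10 ass s01.
Qed.

Theorem mainTheorem1 (K : closedFieldType) (hK : [pchar K] =i pred0)
    (A0 A1 : vectType K) (S : superMul A0 A1) (hS : assoc_superalgebra S) :
  (exists B : A0 * A1 -> A0 * A1 -> K, even_symmetric_structure S B) <->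
  (exists (phi0 : A0 -> A0 -> K) (phi1 : A1 -> A1 -> K),
     [/\ dual_iso phi0, dual_iso phi1, bimod_map0 S phi0 & bimod_map1 S phi1] /\
     [/\ (forall x y : A0, phi0 x y = phi0 y x),
         (forall x y : A1, phi1 x y = - phi1 y x)
       & forall (x : A0) (y z : A1), phi1 (m01 S x y) z = phi0 x (m11 S y z)]).
Proof.
split.
  by case=> B hB; exact: forward hS B hB.
case=> phi0 [phi1 [[d0 d1 b0 b1] [s0 s1 h]]].
by eexists; exact: backward d0 d1 b0 b1 s0 s1 h.
Qed.
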